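(* Let $n\ge k\ge 1$ and $s\ge t \ge 0$ be integers. If $\mathcal{H} \subset EM(n,k,s,t)$ and $|\mathcal{H}| = m$, then $|\partial\mathcal{H}|\ge |\partial L_{m}EM(n,k,s,t)|$.
   Context: $[n]=\{1,\dots,n\}$, $\binom{[n]}{k}$ is the family of $k$-subsets of $[n]$. For $0\le t\le\min\{k,s\}$, $EM(n,k,s,t)=\{A\in\binom{[n]}{k}: |A\cap[s]|\ge t\}$; $EM(n,k,s,t)=\emptyset$ if $t>\min\{k,s\}$, and $=\binom{[n]}{k}$ if $n\le s$. $\partial\mathcal{H}=\{A\in\binom{[n]}{k-1}: A\subset B\text{ for some }B\in\mathcal{H}\}$. Colex order: $A\prec B$ iff $\max\big((A\setminus B)\cup(B\setminus A)\big)\in B$; $L_m\mathcal{F}$ is the set of the first $m$ members of $\mathcal{F}$ in colex order. *)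

(* Defs.v *)
(* Ground set [n] = {1,...,n} is modelled by 'I_n,
   the ordinal i : 'I_n standing for the integer i+1. *)
From mathcomp Require Import all_boot.
Set Implicit Arguments. Unset Strict Implicit. Unset Printing Implicit Defensive.

(* |A ∩ [s]| : elements i+1 <= s, i.e. i < s *)
Definition EM (n k s t : nat) : {set {set 'I_n}} :=
  [set A : {set 'I_n} | (#|A| == k) && (t <= #|[set i in A | (i : nat) < s]|)].

Definition shadow (n k : nat) (H : {set {set 'I_n}}) : {set {set 'I_n}} :=
  [set B : {set 'I_n} | (#|B| == k.-1) && [exists A in H, B \subset A]].

Definition colex_lt (n : nat) (A B : {set 'I_n}) : bool :=
  [exists x in B :\: A,
     [forall y in (A :\: B) :|: (B :\: A), (y : nat) <= x]].

Definition firstm (n : nat) (m : nat) (F : {set {set 'I_n}}) : {set {set 'I_n}} :=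
  [set A in F | #|[set B in F | colex_lt B A]| < m].

(* Main.v *)
Require Import Defs.
From mathcomp Require Import all_boot.
From mathcomp Require Import zify.
Set Implicit Arguments. Unset Strict Implicit. Unset Printing Implicit Defensive.

Lemma arith1 (t c1 cV' cA cU' cA' cV cU yb bz : nat) :
  c1 + cV' = cA + cU' -> cA' + cV = cA + cU -> cV = cV' + yb -> cU = cU' + bz ->
  t <= cA' -> t <= cA -> (yb = 1) \/ (cV = 0) -> bz <= 1 -> t <= c1.
Proof. lia. Qed.

Lemma arith2 (t c cV' cA'' cU' cAz bw cA bz cV yb cU cA' : nat) :
  c + cV' = cA'' + cU' -> cA'' = cAz + bw -> cA = cAz + bz -> cV = cV' + yb ->
  cU = cU' + bw -> cA' + cV = cA + cU -> t <= cA' -> t <= cA'' ->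
  (yb = 1 \/ cV = 0) -> bz <= 1 -> t <= c.
Proof. lia. Qed.

Lemma arith3 (t cX cV cA'' cU cAz bw cA bz cA' : nat) :
  cX + cV = cA'' + cU -> cA'' = cAz + bw -> cA = cAz + bz -> cA' + cV = cA + cU ->
  t <= cA' -> t <= cA'' -> cX < t -> bz <= 1 -> bw = 0 /\ cU < cV.
Proof. lia. Qed.

Lemma arith4 (t c cV2 cA'' cU cVv bw cV cAz cA bz cA' : nat) :
  c + cV2 = cA'' + cU -> cV2 = cVv + bw -> bw = 0 -> cV = cVv + 1 ->
  cA'' = cAz + bw -> cA = cAz + bz -> cA' + cV = cA + cU -> t <= cA' -> bz <= 1 -> t <= c.
Proof. lia. Qed.

Lemma arith_mu1 (p M n c1 d1 c2 d2 : nat) : M = 2 * n + 1 -> c1 <= n ->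
  p + (c1 + n - d1) < M + p + (c2 + n - d2).
Proof. lia. Qed.

Lemma arith_mu2 (p n cV2 cVv cV cU : nat) : cU <= n -> cV2 = cVv + 0 -> cV = cVv + 1 ->
  p + (cV2 + n - cU) < p + (cV + n - cU).
Proof. lia. Qed.

Lemma b2n_le1 (b : bool) : b <= 1. Proof. by case: b. Qed.

Section KK.
Variables (n k s t : nat).
Local Notation T := {set 'I_n}.

Definition S : T := [set i : 'I_n | i < s].
Definition cnt (X : T) := #|X :&: S|.

Lemma card_disjU (I : finType) (X Y : {set I}) : [disjoint X & Y] -> #|X :|: Y| = #|X| + #|Y|.
Proof. move=> d; have := cardsUI X Y; rewrite (disjoint_setI0 d) cards0; lia. Qed.

Lemma cnt_disjU (X Y : T) : [disjoint X & Y] -> cnt (X :|: Y) = cnt X + cnt Y.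
Proof.
move=> d; rewrite /cnt setIUl card_disjU //.
exact: (disjointW (subsetIl X S) (subsetIl Y S) d).
Qed.

Lemma cnt_sub (X Y : T) : X \subset Y -> cnt Y = cnt (Y :\: X) + cnt X.
Proof.
move=> sXY; rewrite -cnt_disjU; last by rewrite disjoint_sym disjoint_subset; apply/subsetP=> i; rewrite !inE => ->.
congr cnt; apply/setP=> i; rewrite !inE; case iX: (i \in X) => //=; rewrite ?orbF //; exact: (subsetP sXY _ iX).
Qed.

Lemma cnt1 (x : 'I_n) : cnt [set x] = (x < s).
Proof.
rewrite /cnt; case: (ltnP x s) => h.
  have -> : [set x] :&: S = [set x] by apply/setP=> i; rewrite !inE; case: eqP => // ->; rewrite h.
  by rewrite cards1.
have -> : [set x] :&: S = set0 by apply/setP=> i; rewrite !inE; case: eqP => // ->; rewrite ltnNge h.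
by rewrite cards0.
Qed.

Lemma cntD1 (X : T) x : x \in X -> cnt X = cnt (X :\ x) + (x < s).
Proof. by move=> xX; rewrite (cnt_sub (X:=[set x])) ?sub1set // cnt1. Qed.

Lemma cntU1 (X : T) x : x \notin X -> cnt (X :|: [set x]) = cnt X + (x < s).
Proof.
move=> xX; rewrite cnt_disjU ?cnt1 //.
by rewrite disjoint_sym disjoints1.
Qed.

Lemma cnt_le (X : T) : cnt X <= #|X|.
Proof. by rewrite /cnt subset_leq_card // subsetIl. Qed.

Lemma EME A : (A \in EM n k s t) = (#|A| == k) && (t <= cnt A).
Proof.
rewrite /EM inE; congr (_ && (t <= _)); rewrite /cnt; apply: eq_card => i.
by rewrite /S !inE.
Qed.

Lemma cnt_cmp (U V A : T) : V \subset A -> [disjoint U & A] ->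
  cnt ((A :\: V) :|: U) + cnt V = cnt A + cnt U.
Proof.
move=> sVA dUA; rewrite cnt_disjU; last first.
  by apply: (disjointWl (subsetDl A V)); rewrite disjoint_sym.
by rewrite (cnt_sub sVA); lia.
Qed.

Lemma card_cmp (U V A : T) : V \subset A -> [disjoint U & A] -> #|U| = #|V| ->
  #|(A :\: V) :|: U| = #|A|.
Proof.
move=> sVA dUA eUV; rewrite card_disjU; last first.
  by apply: (disjointWl (subsetDl A V)); rewrite disjoint_sym.
have := cardsID V A; rewrite (setIidPr sVA); lia.
Qed.


Definition EMs := EM n k s t.

Definition cmp (U V A : T) : T :=
  if [&& V \subset A, [disjoint U & A] & t <= cnt ((A :\: V) :|: U)]
  then (A :\: V) :|: U else A.

Definition closed (U V : T) (F : {set T}) := forall A, A \in F -> cmp U V A \in F.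
Definition closedb (U V : T) (F : {set T}) := [forall A in F, cmp U V A \in F].

Lemma closedP (U V : T) (F : {set T}) : reflect (closed U V F) (closedb U V F).
Proof. exact: forall_inP. Qed.

Definition cfam (U V : T) (F : {set T}) : {set T} :=
  [set A in F | cmp U V A \in F] :|: [set cmp U V A | A in [set A in F | cmp U V A \notin F]].

Definition useful (U V : T) :=
  [&& [disjoint U & V], #|U| == #|V| &
      [exists x in V, [forall y in U :|: V, (y : nat) <= x]]].

Lemma cmpP (U V A : T) : cmp U V A != A ->
  [/\ V \subset A, [disjoint U & A], t <= cnt ((A :\: V) :|: U)
    & cmp U V A = (A :\: V) :|: U].
Proof.
rewrite /cmp; case: ifP => [/and3P[h1 h2 h3] _|]; last by rewrite eqxx.
by split.
Qed.

Lemma cmp_app (U V A : T) : V \subset A -> [disjoint U & A] -> t <= cnt ((A :\: V) :|: U) ->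
  cmp U V A = (A :\: V) :|: U.
Proof. by move=> h1 h2 h3; rewrite /cmp h1 h2 h3. Qed.

Lemma recover (U V A : T) : V \subset A -> [disjoint U & A] -> [disjoint U & V] ->
  (((A :\: V) :|: U) :\: U) :|: V = A.
Proof.
move=> sVA dUA dUV; apply/setP=> i; rewrite !inE.
case iV: (i \in V); first by rewrite orbT (subsetP sVA _ iV).
case iU: (i \in U) => /=; last by rewrite !orbF.
by rewrite (disjointFr dUA iU).
Qed.

Lemma cmp_inj (U V : T) : [disjoint U & V] ->
  {in [pred A | cmp U V A != A] &, injective (cmp U V)}.
Proof.
move=> dUV A1 A2; rewrite !inE => /cmpP[h1 h2 _ e1] /cmpP[h1' h2' _ e2] e.
by rewrite -(recover h1 h2 dUV) -(recover h1' h2' dUV) -e1 -e2 e.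
Qed.

Lemma card_filter (F : {set T}) (p : pred T) :
  #|[set A in F | p A]| + #|[set A in F | ~~ p A]| = #|F|.
Proof.
rewrite -(cardsID [set A | p A] F); congr (_ + _); apply: eq_card => A; rewrite !inE //.
by rewrite andbC.
Qed.

Lemma cfam_card (U V : T) (F : {set T}) : [disjoint U & V] -> #|cfam U V F| = #|F|.
Proof.
move=> dUV; rewrite /cfam card_disjU; last first.
  rewrite disjoint_sym disjoint_subset; apply/subsetP=> X /imsetP[A].
  rewrite !inE => /andP[_ h] ->; by rewrite (negbTE h).
rewrite (@card_in_imset _ _ (cmp U V)); first exact: card_filter.
move=> A1 A2; rewrite !inE => /andP[a1 c1] /andP[a2 c2].
apply: cmp_inj => //; rewrite inE; apply: contraNneq; [| exact: c1| | exact: c2]; by move=> ->.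
Qed.


Lemma cmp_EM (U V A : T) : #|U| = #|V| -> A \in EMs -> cmp U V A \in EMs.
Proof.
move=> eUV; case: (eqVneq (cmp U V A) A) => [->//|/cmpP[h1 h2 h3 ->]].
by rewrite /EMs !EME card_cmp // h3 andbT => /andP[].
Qed.

Lemma cfam_EM (U V : T) (F : {set T}) : #|U| = #|V| -> F \subset EMs -> cfam U V F \subset EMs.
Proof.
move=> eUV sF; apply/subsetP=> X; rewrite /cfam => /setUP[|/imsetP[A]].
  by rewrite inE => /andP[h _]; exact: (subsetP sF _ h).
rewrite inE => /andP[h _] ->; apply: cmp_EM => //; exact: (subsetP sF _ h).
Qed.

Definition wt (A : T) := \sum_(i in A) 2 ^ (i : nat).
Definition Wt (F : {set T}) := \sum_(A in F) wt A.

Lemma sum_disjU (I : finType) (X Y : {set I}) (f : I -> nat) : [disjoint X & Y] ->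
  \sum_(i in X :|: Y) f i = \sum_(i in X) f i + \sum_(i in Y) f i.
Proof. by move=> d; rewrite -bigU //=; apply: eq_bigl => i; rewrite !inE. Qed.

Lemma pow2sum x : (\sum_(i < x) 2 ^ i).+1 = 2 ^ x.
Proof.
elim: x => [|x IH]; first by rewrite big_ord0.
by rewrite big_ord_recr /= -addSn IH expnS; lia.
Qed.

Lemma wt_lt (U : T) (x : 'I_n) : (forall i, i \in U -> i < x) -> wt U < 2 ^ x.
Proof.
move=> hU; rewrite -pow2sum ltnS (big_ord_widen n (fun i => 2 ^ i) (ltnW (ltn_ord x))).
rewrite (bigID (fun i => i \in U)) /=.
apply: leq_trans (leq_addr _ _); rewrite /wt; apply: eq_leq; apply: eq_bigl => i.
by case iU: (i \in U); rewrite ?andbF ?andbT ?hU.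
Qed.

Lemma wt_disjU (X Y : T) : [disjoint X & Y] -> wt (X :|: Y) = wt X + wt Y.
Proof. exact: sum_disjU. Qed.

Lemma wt_cmp (U V A : T) : useful U V -> V \subset A -> [disjoint U & A] ->
  wt ((A :\: V) :|: U) < wt A.
Proof.
case/and3P=> dUV _ /exists_inP[x0 x0V /forall_inP hx] sVA dUA.
have dAU : [disjoint A :\: V & U] by apply: (disjointWl (subsetDl A V)); rewrite disjoint_sym.
have dAV : [disjoint A :\: V & V].
  by rewrite disjoint_subset; apply/subsetP=> i; rewrite !inE => /andP[].
have eA : A = (A :\: V) :|: V.
  apply/setP=> i; rewrite !inE; case iV: (i \in V) => //=; last by rewrite orbF.
  exact: (subsetP sVA _ iV).
rewrite [in X in _ < X]eA !wt_disjU // ltn_add2l.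
apply: (leq_trans (wt_lt (x := x0) _)).
  move=> i iU; rewrite ltn_neqAle hx ?inE ?iU // andbT.
  by apply/eqP=> e; move: (disjointFr dUV iU); rewrite (val_inj e) x0V.
by rewrite /wt (bigD1 x0) //=; apply: leq_addr.
Qed.

Lemma Wt_cfam (U V : T) (F : {set T}) : useful U V -> ~~ closedb U V F ->
  Wt (cfam U V F) < Wt F.
Proof.
move=> uUV ncl; have dUV : [disjoint U & V] by case/and3P: uUV.
set P1 := [set A in F | cmp U V A \in F].
set M := [set A in F | cmp U V A \notin F].
have dPI : [disjoint P1 & [set cmp U V A | A in M]].
  rewrite disjoint_sym disjoint_subset; apply/subsetP=> X /imsetP[A].
  rewrite !inE => /andP[_ h] ->; by rewrite (negbTE h).
have eF : F = P1 :|: M by apply/setP=> A; rewrite !inE -andb_orr orbN andbT.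
have dPM : [disjoint P1 & M].
  by rewrite disjoint_subset; apply/subsetP=> A; rewrite !inE => /andP[_ ->]; rewrite andbF.
rewrite /Wt /cfam -/P1 -/M sum_disjU // [in X in _ < X]eF sum_disjU // ltn_add2l.
rewrite big_imset /=; last first.
  move=> A1 A2; rewrite !inE => /andP[a1 c1] /andP[a2 c2].
  apply: cmp_inj => //; rewrite inE; apply: contraNneq; [| exact: c1| | exact: c2]; by move=> ->.
case/forall_inPn: ncl => A0 A0F nA0.
have A0M : A0 \in M by rewrite inE A0F nA0.
have hlt : forall A, A \in M -> wt (cmp U V A) < wt A.
  move=> A; rewrite inE => /andP[AF cA].
  have : cmp U V A != A by apply: contraNneq cA => ->.
  by case/cmpP=> h1 h2 _ ->; apply: wt_cmp.
rewrite (bigD1 A0) //= [in X in _ < X](bigD1 A0) //=.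
have h1 := hlt _ A0M.
have h2 : \sum_(i in M | i != A0) wt (cmp U V i) <= \sum_(i in M | i != A0) wt i.
  by apply: leq_sum => A /andP[/hlt/ltnW].
by rewrite -addSn; apply: leq_add.
Qed.


Lemma shadowE (F : {set T}) (B : T) :
  (B \in shadow k F) = (#|B| == k.-1) && [exists A in F, B \subset A].
Proof. by rewrite inE. Qed.

Lemma key_lemma (U V : T) (F : {set T}) (x0 : 'I_n) :
  F \subset EMs -> [disjoint U & V] -> #|U| = #|V| -> x0 \in V ->
  (forall x, x \in U -> exists y, [/\ y \in V, closed (U :\ x) (V :\ y) F
                                   & (y < s) || (cnt V == 0)]) ->
  (forall w, w \notin U -> w \notin V -> ~~ (w < s) -> cnt U < cnt V ->
      exists v, [/\ v \in V, v < s & closed U ((V :\ v) :|: [set w]) F]) ->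
  forall B, B \in shadow k (cfam U V F) -> B \notin shadow k F ->
    [/\ U \subset B, [disjoint V & B] & (B :\: U) :|: V \in shadow k F :\: shadow k (cfam U V F)].
Proof.
move=> sF dUV eUV x0V H1 H2.
have dVU : [disjoint V & U] by rewrite disjoint_sym.
have hUV : forall i, i \in U -> (i \in V) = false by move=> i; apply: disjointFr.
move=> B iB nB.
have Bsh : forall C, C \in F -> B \subset C -> False.
  move=> C CF sBC; move/negP: nB; apply; rewrite shadowE.
  move: iB; rewrite shadowE => /andP[-> _]; apply/exists_inP; by exists C.
move: iB; rewrite shadowE => /andP[/eqP cB /exists_inP[A' A'in sBA']].
have A'nF : A' \notin F by apply/negP => A'F; exact: (Bsh A').
move: A'in; rewrite /cfam => /setUP[].
  by rewrite inE => /andP[A'F _]; rewrite A'F in A'nF.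
case/imsetP => A; rewrite inE => /andP[AF cAnF] eA'.
have cAA : cmp U V A != A by apply: contraNneq cAnF => ->.
case/cmpP: (cAA) => sVA dUA cntA' eA; rewrite eA in eA'.
have hUA : forall i, i \in U -> (i \in A) = false by move=> i; apply: disjointFr.
have hVA : forall i, i \in V -> i \in A by move=> i; apply: (subsetP sVA).
have AEM := subsetP sF _ AF; move: (AEM); rewrite /EMs EME => /andP[/eqP cardA cntA].
have x0A : x0 \in A := hVA _ x0V.
have cardA' : #|A'| = k by rewrite eA' card_cmp.
have : ~~ (A' \subset B).
  apply/negP => /subset_leq_card; rewrite cB cardA'.
  have : 0 < k by rewrite -cardA; apply/card_gt0P; exists x0.
  by case: (k) => // k' _ /=; rewrite ltnn.
case/subsetPn => z zA' zB.
have eB : B = A' :\ z.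
  apply/eqP; rewrite eqEcard; apply/andP; split.
    apply/subsetP => i iB; rewrite !inE (subsetP sBA' _ iB) andbT.
    by apply/eqP => e; move: zB; rewrite -e iB.
  rewrite cB; have := cardsD1 z A'; rewrite zA' cardA' => ->; by rewrite add1n.
subst B A'.
have Bsh2 : forall C, C \in F -> (forall i, i != z -> (i \notin V) && (i \in A) || (i \in U) -> i \in C) -> False.
  move=> C CF h; apply: (Bsh C CF); apply/subsetP => i; rewrite !inE => /andP[iz hi]; exact: h.
have zA'm : (z \notin V) && (z \in A) || (z \in U) by move: zA'; rewrite !inE.
case zU: (z \in U).
  case: (H1 z zU) => y [yV cl ycond].
  have s1 : V :\ y \subset A by apply: subset_trans sVA; apply: subD1set.
  have d1 : [disjoint U :\ z & A] by apply: disjointWl dUA; apply: subD1set.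
  have c1 : t <= cnt ((A :\: (V :\ y)) :|: (U :\ z)).
    apply: (arith1 (cnt_cmp s1 d1) (cnt_cmp sVA dUA) (cntD1 yV) (cntD1 zU) cntA' cntA _ (b2n_le1 _)).
    by case/orP: ycond => [->|/eqP]; [left|right].
  have C1F := cl _ AF; rewrite (cmp_app s1 d1 c1) in C1F.
  exfalso; apply: (Bsh2 _ C1F) => i iz; rewrite !inE.
  case/orP => [/andP[iV iA]|iU]; first by rewrite (negbTE iV) andbF iA.
  by rewrite iz iU orbT.
have zA : z \in A by move: zA'm; rewrite zU orbF => /andP[].
have zV : z \notin V by move: zA'm; rewrite zU orbF => /andP[].
have sUB : U \subset ((A :\: V) :|: U) :\ z.
  apply/subsetP => i iU; rewrite !inE iU orbT andbT.
  by apply/eqP => e; move: zU; rewrite -e iU.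
have dVB : [disjoint V & ((A :\: V) :|: U) :\ z].
  rewrite disjoint_subset; apply/subsetP => i iV; rewrite !inE iV /=.
  by rewrite (disjointFl dUV iV) ?andbF ?orbF.
set B := ((A :\: V) :|: U) :\ z.
have cardB : #|B| = k.-1.
  have := cardsD1 z ((A :\: V) :|: U); rewrite zA' cardA' => ->; by rewrite add1n.
have ephi : (B :\: U) :|: V = A :\ z.
  apply/eqP; rewrite eqEcard; apply/andP; split.
    apply/subsetP => i; rewrite !inE => /orP[/andP[iU /andP[iz /orP[/andP[_ ->]|iU']]]|iV].
    - by rewrite andbT.
    - by rewrite iU' in iU.
    - by rewrite (hVA _ iV) andbT; apply/eqP => e; move: zV; rewrite -e iV.
  rewrite (card_cmp sUB dVB (esym eUV)) cardB.
  have := cardsD1 z A; rewrite zA cardA => ->; by rewrite add1n.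
split => //; rewrite in_setD; apply/andP; split; last first.
  rewrite shadowE ephi; have := cardsD1 z A; rewrite zA cardA => ->; rewrite add1n eqxx /=.
  apply/exists_inP; exists A => //; exact: subD1set.
rewrite ephi; apply/negP; rewrite shadowE => /andP[_ /exists_inP[A'' A''in sA'']].
have sVAz : V \subset A :\ z.
  apply/subsetP => i iV; rewrite !inE hVA // andbT.
  by apply/eqP => e; move: zV; rewrite -e iV.
have sVA'' : V \subset A'' := subset_trans sVAz sA''.
have x0A'' : x0 \in A'' := subsetP sVA'' _ x0V.
move: A''in => /setUP[|/imsetP[X]]; last first.
  rewrite inE => /andP[XF cXnF] eX.
  have : cmp U V X != X by apply: contraNneq cXnF => ->.
  case/cmpP => _ _ _ eX'; move: x0A''; rewrite eX eX' !inE x0V /=.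
  by rewrite (disjointFl dUV x0V).
rewrite inE => /andP[A''F cA''F].
have A''EM := subsetP sF _ A''F; move: (A''EM); rewrite /EMs EME => /andP[/eqP cardA'' cntA''].
have eAz := cardsD1 z A; rewrite zA cardA in eAz.
have : ~~ (A'' \subset A :\ z).
  apply/negP => /subset_leq_card; rewrite cardA'' eAz add1n ltnn; done.
case/subsetPn => w wA'' wAz.
have eA'' : A'' = (A :\ z) :|: [set w].
  apply/esym/eqP; rewrite eqEcard; apply/andP; split.
    apply/subsetP => i; rewrite in_setU in_set1 => /orP[iAz|/eqP->//].
    exact: (subsetP sA'').
  rewrite card_disjU; last by rewrite disjoint_sym disjoints1.
  by rewrite cards1 cardA'' eAz addnC.
case: (eqVneq w z) => [ewz|wz].
  rewrite ewz setUC setD1K // in eA''.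
  by rewrite eA'' (negbTE cAnF) in cA''F.
have wA : w \notin A by move: wAz; rewrite !inE wz.
have inA'' : forall i, i != z -> i \in A -> i \in A''.
  by move=> i iz iA; apply: (subsetP sA''); rewrite !inE iz iA.
have cA''e : cnt A'' = cnt (A :\ z) + (w < s) by rewrite eA'' cntU1.
case wU: (w \in U).
  case: (H1 w wU) => y [yV cl ycond].
  have s2 : V :\ y \subset A'' by apply: subset_trans sVA''; apply: subD1set.
  have d2 : [disjoint U :\ w & A''].
    rewrite eA'' disjoint_subset; apply/subsetP => i; rewrite !inE => /andP[iw iU].
    by rewrite (hUA _ iU) andbF /=.
  have c2 : t <= cnt ((A'' :\: (V :\ y)) :|: (U :\ w)).
    apply: (arith2 (cnt_cmp s2 d2) cA''e (cntD1 zA) (cntD1 yV) (cntD1 wU) (cnt_cmp sVA dUA) cntA' cntA'' _ (b2n_le1 _)).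
    by case/orP: ycond => [->|/eqP]; [left|right].
  have C2F := cl _ A''F; rewrite (cmp_app s2 d2 c2) in C2F.
  apply: (Bsh2 _ C2F) => i iz; rewrite !inE.
  case/orP => [/andP[iV iA]|iU]; first by rewrite (negbTE iV) andbF /= (inA'' _ iz iA).
  case: (eqVneq i w) => [->|iw]; first by rewrite (hUV _ wU) andbF /= wA''.
  by rewrite iU orbT.
have wV : w \notin V by apply/negP => wV; move: wA; rewrite (hVA _ wV).
have dUA'' : [disjoint U & A''].
  rewrite eA'' disjoint_subset; apply/subsetP => i iU; rewrite !inE (hUA _ iU) andbF /=.
  by apply/eqP => e; move: wU; rewrite -e iU.
case ct: (t <= cnt ((A'' :\: V) :|: U)).
  move: cA''F; rewrite (cmp_app sVA'' dUA'' ct) => CF.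
  apply: (Bsh2 _ CF) => i iz; rewrite !inE.
  case/orP => [/andP[iV iA]|iU]; first by rewrite iV /= (inA'' _ iz iA).
  by rewrite iU orbT.
have ct' : cnt ((A'' :\: V) :|: U) < t by rewrite ltnNge ct.
case: (arith3 (cnt_cmp sVA'' dUA'') cA''e (cntD1 zA) (cnt_cmp sVA dUA) cntA' cntA'' ct' (b2n_le1 _)) => bw0 cUV.
have ws : ~~ (w < s) by move: bw0; case: (w < s).
case: (H2 w (negbT wU) wV ws cUV) => v [vV vs cl2].
have sV2 : (V :\ v) :|: [set w] \subset A''.
  apply/subsetP => i; rewrite in_setU in_set1 => /orP[/setD1P[_ iV]|/eqP->//].
  exact: (subsetP sVA'' _ iV).
have wVv : w \notin V :\ v by rewrite !inE (negbTE wV) andbF.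
have eVv := cntD1 vV; rewrite vs in eVv.
have c3 : t <= cnt ((A'' :\: ((V :\ v) :|: [set w])) :|: U).
  exact: (arith4 (cnt_cmp sV2 dUA'') (cntU1 wVv) bw0 eVv cA''e (cntD1 zA) (cnt_cmp sVA dUA) cntA' (b2n_le1 _)).
have C3F := cl2 _ A''F; rewrite (cmp_app sV2 dUA'' c3) in C3F.
apply: (Bsh2 _ C3F) => i iz; rewrite !inE.
case/orP => [/andP[iV iA]|iU]; last by rewrite iU orbT.
have iw : (i == w) = false by apply/eqP => e; move: wA; rewrite -e iA.
by rewrite (negbTE iV) andbF iw /= (inA'' _ iz iA).
Qed.

Lemma shadow_cfam (U V : T) (F : {set T}) (x0 : 'I_n) :
  F \subset EMs -> [disjoint U & V] -> #|U| = #|V| -> x0 \in V ->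
  (forall x, x \in U -> exists y, [/\ y \in V, closed (U :\ x) (V :\ y) F
                                   & (y < s) || (cnt V == 0)]) ->
  (forall w, w \notin U -> w \notin V -> ~~ (w < s) -> cnt U < cnt V ->
      exists v, [/\ v \in V, v < s & closed U ((V :\ v) :|: [set w]) F]) ->
  #|shadow k (cfam U V F)| <= #|shadow k F|.
Proof.
move=> sF dUV eUV x0V H1 H2.
set Sh' := shadow k (cfam U V F); set Sh := shadow k F.
pose phi (B : T) := (B :\: U) :|: V.
have dVU : [disjoint V & U] by rewrite disjoint_sym.
have hUV : forall i, i \in U -> (i \in V) = false by move=> i; apply: disjointFr.
have key : forall B, B \in Sh' -> B \notin Sh ->
    [/\ U \subset B, [disjoint V & B] & phi B \in Sh :\: Sh'].
  move=> B; exact: (key_lemma sF dUV eUV x0V H1 H2).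
have inj : {in Sh' :\: Sh &, injective phi}.
  move=> B1 B2; rewrite !in_setD => /andP[n1 i1] /andP[n2 i2] e.
  case: (key _ i1 n1) => u1 d1 _; case: (key _ i2 n2) => u2 d2 _.
  by rewrite -(recover u1 d1 dVU) -(recover u2 d2 dVU); congr (_ :\: _ :|: _).
have : #|Sh' :\: Sh| <= #|Sh :\: Sh'|.
  rewrite -(card_in_imset inj); apply: subset_leq_card; apply/subsetP => X /imsetP[B].
  by rewrite in_setD => /andP[nB iB] ->; case: (key _ iB nB).
have := cardsID Sh Sh'; have := cardsID Sh' Sh; rewrite setIC; lia.
Qed.

Definition mu (U V : T) := #|U| * (2 * n + 1) + (cnt V + n - cnt U).

Lemma cnt_len (X : T) : cnt X <= n.
Proof. apply: leq_trans (cnt_le X) _; apply: leq_trans (max_card _) _; by rewrite card_ord. Qed.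

Lemma cntS (X : T) : X \subset S -> cnt X = #|X|.
Proof. by move=> sXS; rewrite /cnt (setIidPl sXS). Qed.

Lemma H1_of (U V : T) x : useful U V -> x \in U ->
  exists y, [/\ y \in V, (y < s) || (cnt V == 0) &
    ((U :\ x == set0) && (V :\ y == set0)) ||
    (useful (U :\ x) (V :\ y) && (mu (U :\ x) (V :\ y) < mu U V))].
Proof.
case/and3P=> dUV /eqP eUV /exists_inP[x0 x0V /forall_inP hx] xU.
have eU := cardsD1 x U; rewrite xU in eU.
case: (ltnP 1 #|U|) => [big|small].
  have [y [yV yx0 ycond]] : exists y, [/\ y \in V, y != x0 & (y < s) || (cnt V == 0)].
    case: (pickP [pred v | (v \in V) && (v < s) && (v != x0)]) => [y /= /andP[/andP[yV ys] yx0]|none].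
      by exists y; rewrite yV yx0 ys.
    have cV0 : cnt V == 0.
      rewrite /cnt cards_eq0; apply/eqP/setP => v; rewrite /S !inE.
      apply/negP => /andP[vV vs]; move: (none v); rewrite /= vV vs /= => /negbFE/eqP ev.
      have x0s : x0 < s by rewrite -ev.
      have : V \subset [set x0].
        apply/subsetP => v' v'V; rewrite inE; apply/negPn/negP => nv'.
        have v's : v' < s by apply: leq_ltn_trans (hx v' _) x0s; rewrite inE v'V orbT.
        by move: (none v'); rewrite /= v'V v's nv'.
      by move/subset_leq_card; rewrite cards1 -eUV; lia.
    have : 0 < #|V :\ x0| by have := cardsD1 x0 V; rewrite x0V -eUV; lia.
    case/card_gt0P => y; rewrite !inE => /andP[yx0 yV].
    by exists y; rewrite yV yx0 cV0 orbT.
  exists y; split => //; apply/orP; right; apply/andP; split.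
    apply/and3P; split.
    - by apply: disjointW dUV; apply: subD1set.
    - by have := cardsD1 y V; rewrite yV -eUV eU => /eqP; rewrite eqn_add2l.
    - apply/exists_inP; exists x0; first by rewrite !inE eq_sym yx0.
      apply/forall_inP => z; rewrite !inE => /orP[/andP[_ zU]|/andP[_ zV]]; apply: hx; by rewrite inE ?zU ?zV ?orbT.
  rewrite /mu eU add1n mulSn addnA.
  apply: arith_mu1; [by rewrite mul2n -addnn addn0 | exact: cnt_len].
have U1 : U :\ x = set0 by apply/eqP; rewrite -cards_eq0; lia.
have : #|V| == 1 by rewrite -eUV; apply/eqP; lia.
case/cards1P => y eV; exists y; rewrite eV set11; split => //.
  by rewrite cnt1; case: (y < s).
by rewrite U1 setDv !eqxx.
Qed.

Lemma H2_of (U V : T) w : useful U V -> w \notin U -> w \notin V -> ~~ (w < s) ->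
  cnt U < cnt V ->
  exists v, [/\ v \in V, v < s, useful U ((V :\ v) :|: [set w])
               & mu U ((V :\ v) :|: [set w]) < mu U V].
Proof.
case/and3P=> dUV /eqP eUV /exists_inP[x0 x0V /forall_inP hx] wU wV ws cUV.
have x0s : ~~ (x0 < s).
  apply/negP => x0s.
  have sub : forall X : T, (forall z, z \in X -> z <= x0) -> X \subset S.
    by move=> X hX; apply/subsetP => z zX; rewrite /S inE; apply: leq_ltn_trans (hX z zX) x0s.
  have hU : cnt U = #|U| by apply: cntS; apply: sub => z zU; apply: hx; rewrite inE zU.
  have hV : cnt V = #|V| by apply: cntS; apply: sub => z zV; apply: hx; rewrite inE zV orbT.
  by move: cUV; rewrite hU hV eUV ltnn.
have : 0 < cnt V by apply: leq_ltn_trans cUV.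
case/card_gt0P => v; rewrite /S !inE => /andP[vV vs].
have vx0 : v != x0 by apply/eqP => e; move: x0s; rewrite -e vs.
have wVv : w \notin V :\ v by rewrite !inE (negbTE wV) andbF.
exists v; split => //.
  apply/and3P; split.
  - rewrite disjoint_subset; apply/subsetP => i iU; rewrite !inE (disjointFr dUV iU) andbF /=.
    by apply/eqP => e; move: wU; rewrite -e iU.
  - rewrite card_disjU; last by rewrite disjoint_sym disjoints1.
    by rewrite cards1 eUV (cardsD1 v V) vV addnC.
  - have hz : forall z, z \in U :|: ((V :\ v) :|: [set w]) -> (z <= x0) || (z == w).
      move=> z; rewrite !inE => /orP[zU|/orP[/andP[_ zV]|->]]; last by rewrite orbT.
        by rewrite hx // inE zU.
      by rewrite hx // inE zV orbT.
    case: (ltnP x0 w) => [x0w|wx0].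
      apply/exists_inP; exists w; first by rewrite !inE eqxx orbT.
      apply/forall_inP => z /hz /orP[zx|/eqP->//]; exact: leq_trans zx (ltnW x0w).
    apply/exists_inP; exists x0; first by rewrite !inE eq_sym vx0 x0V.
    by apply/forall_inP => z /hz /orP[//|/eqP->].
rewrite /mu; apply: (@arith_mu2 _ _ _ (cnt (V :\ v)) _ _ (cnt_len U)).
  by rewrite (cntU1 wVv) (negbTE ws).
by rewrite (cntD1 vV) vs.
Qed.

Lemma colex_irr (A : T) : ~~ colex_lt A A.
Proof. by apply/negP => /exists_inP[x]; rewrite setDv inE. Qed.

Lemma colex_total (A B : T) : A != B -> colex_lt A B || colex_lt B A.
Proof.
move=> nAB.
have : (A :\: B) :|: (B :\: A) != set0.
  apply: contra nAB => /eqP e; apply/eqP/setP => i.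
  move/setP/(_ i): e; rewrite !inE.
  by case: (i \in A); case: (i \in B).
case/set0Pn => i0 i0D.
case: (@arg_maxnP _ i0 (mem ((A :\: B) :|: (B :\: A))) (fun i : 'I_n => (i : nat)) i0D) => x xD hx.
move: (xD) => /setUP[xAB|xBA].
  apply/orP; right; apply/exists_inP; exists x => //.
  by apply/forall_inP => y; rewrite setUC => /hx.
apply/orP; left; apply/exists_inP; exists x => //.
by apply/forall_inP => y /hx.
Qed.

Lemma final (F : {set T}) : F \subset EMs ->
  (forall U V, useful U V -> closed U V F) -> F = firstm #|F| EMs.
Proof.
move=> sF hcl.
have down : forall A B, A \in F -> B \in EMs -> colex_lt B A -> B \in F.
  move=> A B AF BEM lt.
  have AEM := subsetP sF _ AF.
  move: (AEM) (BEM); rewrite /EMs !EME => /andP[/eqP cA _] /andP[/eqP cB cntB].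
  have u : useful (B :\: A) (A :\: B).
    apply/and3P; split => //.
    - rewrite disjoint_subset; apply/subsetP => i; rewrite !inE => /andP[iA _].
      by rewrite (negbTE iA) andbF.
    - have := cardsID A B; have := cardsID B A; rewrite setIC cA cB => <-.
      by move/eqP; rewrite eqn_add2l eq_sym.
  have eB : (A :\: (A :\: B)) :|: (B :\: A) = B.
    apply/setP => i; rewrite !inE.
    by case: (i \in A); case: (i \in B).
  have := hcl _ _ u _ AF; rewrite (cmp_app (subsetDl A B)) ?eB //.
  rewrite disjoint_subset; apply/subsetP => i; rewrite !inE => /andP[iA _].
  by rewrite (negbTE iA).
apply/setP => A; rewrite /firstm inE -/EMs.
case AF: (A \in F).
  rewrite (subsetP sF _ AF) /=.
  apply/esym; apply: (@leq_ltn_trans #|F :\ A|); last by rewrite (cardsD1 A F) AF.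
  apply: subset_leq_card; apply/subsetP => B; rewrite !inE => /andP[BEM lt].
  have BEM' : B \in EMs by rewrite /EMs /EM inE.
  apply/andP; split; last exact: (down A B AF BEM' lt). apply/eqP => e; move: lt; rewrite e.
  by move/negP: (colex_irr A).
apply/esym/negbTE/negP => /andP[AEM].
apply/negP; rewrite -leqNgt; apply: subset_leq_card; apply/subsetP => X XF.
rewrite inE (subsetP sF _ XF) /=.
have : X != A by apply/eqP => e; move: AF; rewrite -e XF.
case/colex_total/orP => // lt.
by move: AF; rewrite (down X A).
Qed.

Lemma closed0 (F : {set T}) : closed set0 set0 F.
Proof.
move=> A AF; rewrite /cmp; case: ifP => // _.
by rewrite setD0 setU0.
Qed.

Lemma main_ind (N : nat) : forall F : {set T}, F \subset EMs -> Wt F < N ->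
  #|shadow k (firstm #|F| EMs)| <= #|shadow k F|.
Proof.
elim: N => [//|N IH] F sF WF.
case: (boolP [forall P : T * T, useful P.1 P.2 ==> closedb P.1 P.2 F]) => [allc|].
  rewrite -(final sF) //.
  move=> U V uUV; apply/closedP; exact: (implyP (forallP allc (U, V)) uUV).
case/forallPn => P0; rewrite negb_imply => /andP[u0 nc0].
have P0P : useful P0.1 P0.2 && ~~ closedb P0.1 P0.2 F by rewrite u0 nc0.
case: (@arg_minnP _ P0 (fun P : T * T => useful P.1 P.2 && ~~ closedb P.1 P.2 F) (fun P => mu P.1 P.2) P0P).
move=> [U V] /= /andP[uUV ncUV] minP.
have smallc : forall U' V', useful U' V' -> mu U' V' < mu U V -> closed U' V' F.
  move=> U' V' u' lt; apply/closedP; apply/negPn/negP => nc.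
  have := minP (U', V'); rewrite /= u' nc => /(_ isT); rewrite leqNgt lt.
  done.
have uUV' := uUV; case/and3P: uUV' => dUV /eqP eUV /exists_inP[x0 x0V _].
have H1 : forall x, x \in U -> exists y, [/\ y \in V, closed (U :\ x) (V :\ y) F
                                   & (y < s) || (cnt V == 0)].
  move=> x xU; case: (H1_of uUV xU) => y [yV yc hc]; exists y; split => //.
  case/orP: hc => [/andP[/eqP -> /eqP ->]|/andP[u lt]]; first exact: closed0.
  exact: smallc.
have H2 : forall w, w \notin U -> w \notin V -> ~~ (w < s) -> cnt U < cnt V ->
      exists v, [/\ v \in V, v < s & closed U ((V :\ v) :|: [set w]) F].
  move=> w wU wV ws cUV; case: (H2_of uUV wU wV ws cUV) => v [vV vs u lt].
  by exists v; split => //; apply: smallc.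
apply: leq_trans (shadow_cfam sF dUV eUV x0V H1 H2).
rewrite -(cfam_card F dUV); apply: IH.
  exact: cfam_EM.
by rewrite -ltnS; apply: leq_trans WF; rewrite ltnS; apply: Wt_cfam.
Qed.

End KK.

Theorem lemma2p5 (n k s t : nat) (H : {set {set 'I_n}}) (m : nat) :
  1 <= k -> k <= n -> t <= s ->
  H \subset EM n k s t -> #|H| = m ->
  #|shadow k (firstm m (EM n k s t))| <= #|shadow k H|.
Proof.
move=> _ _ _ sH <-.
exact: (@main_ind n k s t (Wt H).+1 H sH (ltnSn _)).
Qed.
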